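(* Let $p\in(1,\infty)$ and let $Y$ be a Banach space whose norm satisfies Rolewicz property $(\beta)$ with power type $p$. Then there exists $\gamma=\gamma(Y)>0$ such that for every non-contractive Lipschitz map $f\colon K_{\omega,1}\to Y$ there exists $i_0\in\mathbb N$ such that $$\|f(r)-f(t_{i_0})\|\le 2\left(\mathrm{Lip}(f)-\frac{\gamma}{\mathrm{Lip}(f)^{p-1}}\right).$$
   Context: For a Banach space $X$ with closed unit ball $B_X$ and a sequence $(y_n)_{n\ge1}$ in $X$, let $\mathrm{sep}[(y_n)]:=\inf\{\|y_m-y_n\|: m\neq n\}$. The $(\beta)$-modulus of the norm is $$\overline{\beta}_X(t):=1-\sup\Big\{\inf_{n\ge1}\tfrac{\|x+y_n\|}{2}\ :\ x\in B_X,\ (y_n)_{n\ge1}\subset B_X,\ \mathrm{sep}[(y_n)]\ge t\Big\}.$$ The norm satisfies Rolewicz property $(\beta)$ with power type $p$ (equivalently, has $(\beta)$-modulus of power type $p$) if there is a constant $c>0$ with $\overline{\beta}_X(t)\ge ct^p$ for all $t\in(0,2]$. $K_{\omega,1}$ is the star graph with a center $b$ and countably infinitely many leaves, each joined to $b$ by an edge; one leaf is denoted $r$ and the remaining leaves are labeled $(t_i)_{i\ge1}$. It carries the unweighted shortest-path metric $\rho$ (so $\rho(r,t_i)=2$, $\rho(t_i,t_j)=2$ for $i\ne j$, $\rho(b,\cdot)=1$ on leaves). A map $f$ between metric spaces is non-contractive if $d(f(x),f(y))\ge \rho(x,y)$ for all $x,y$; $\mathrm{Lip}(f)$ denotes its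 Lipschitz constant. *)

(* Defs.v *)
From Stdlib Require Import Reals Lra.
Open Scope R_scope.

Record Banach := {
  bX :> Type;
  badd : bX -> bX -> bX;
  bopp : bX -> bX;
  bzero : bX;
  bscal : R -> bX -> bX;
  bnorm : bX -> R;
  badd_assoc : forall x y z, badd x (badd y z) = badd (badd x y) z;
  badd_comm : forall x y, badd x y = badd y x;
  badd_zero : forall x, badd x bzero = x;
  badd_opp : forall x, badd x (bopp x) = bzero;
  bscal_one : forall x, bscal 1 x = x;
  bscal_assoc : forall a b x, bscal a (bscal b x) = bscal (a * b) x;
  bscal_distr_r : forall a x y, bscal a (badd x y) = badd (bscal a x) (bscal a y);
  bscal_distr_l : forall a b x, bscal (a + b) x = badd (bscal a x) (bscal b x);
  bnorm_nonneg : forall x, 0 <= bnorm x;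
  bnorm_eq0 : forall x, bnorm x = 0 -> x = bzero;
  bnorm_scal : forall a x, bnorm (bscal a x) = Rabs a * bnorm x;
  bnorm_triangle : forall x y, bnorm (badd x y) <= bnorm x + bnorm y;
  bcomplete : forall u : nat -> bX,
    (forall eps, 0 < eps -> exists N, forall m n, (N <= m)%nat -> (N <= n)%nat ->
        bnorm (badd (u m) (bopp (u n))) < eps) ->
    exists l, forall eps, 0 < eps -> exists N, forall n, (N <= n)%nat ->
        bnorm (badd (u n) (bopp l)) < eps
}.

Arguments badd {b0}. Arguments bopp {b0}. Arguments bnorm {b0}.

Definition bsub {X : Banach} (x y : X) : X := badd x (bopp y).

Definition inf_le (a : nat -> R) (M : R) : Prop :=
  forall eps, 0 < eps -> exists n, a n < M + eps.

Definition sep_ge {X : Banach} (y : nat -> X) (t : R) : Prop :=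
  forall m n : nat, m <> n -> t <= bnorm (bsub (y m) (y n)).

(* beta_X(t) >= b, i.e. sup{ inf_n ||x+y_n||/2 : x, y_n in B_X, sep >= t } <= 1 - b *)
Definition beta_modulus_ge (X : Banach) (t b : R) : Prop :=
  forall (x : X) (y : nat -> X),
    bnorm x <= 1 -> (forall n, bnorm (y n) <= 1) -> sep_ge y t ->
    inf_le (fun n => bnorm (badd x (y n)) / 2) (1 - b).

Definition beta_power_type (X : Banach) (p : R) : Prop :=
  exists c, 0 < c /\ forall t, 0 < t <= 2 -> beta_modulus_ge X t (c * Rpower t p).

(* The star graph K_{omega,1}: center b, distinguished leaf r, leaves t_i *)
Inductive Kw1 : Type := Kb | Kr | Kt (i : nat).

Definition rho (u v : Kw1) : R :=
  match u, v with
  | Kb, Kb => 0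
  | Kr, Kr => 0
  | Kt i, Kt j => if Nat.eqb i j then 0 else 2
  | Kb, _ => 1
  | _, Kb => 1
  | _, _ => 2
  end.

Definition noncontractive {X : Banach} (f : Kw1 -> X) : Prop :=
  forall u v, rho u v <= bnorm (bsub (f u) (f v)).

Definition lipschitz {X : Banach} (f : Kw1 -> X) : Prop :=
  exists L, forall u v, bnorm (bsub (f u) (f v)) <= L * rho u v.

Definition Lip_is {X : Banach} (f : Kw1 -> X) (L : R) : Prop :=
  is_lub (fun s => exists u v, u <> v /\ s = bnorm (bsub (f u) (f v)) / rho u v) L.

(* Main.v *)
Require Import Defs.
From Stdlib Require Import Reals Lra Lia.
Open Scope R_scope.

Section Alg.
Variable X : Banach.
Implicit Types x y u v : X.

Lemma zero_l x : badd (bzero X) x = x.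
Proof. rewrite badd_comm. apply badd_zero. Qed.

Lemma opp_unique x y : badd x y = bzero X -> y = bopp x.
Proof.
  intro H. rewrite <- (badd_zero X y). rewrite <- (badd_opp X x).
  rewrite badd_assoc. rewrite (badd_comm X y x). rewrite H. apply zero_l.
Qed.

Lemma opp_l x : badd (bopp x) x = bzero X.
Proof. rewrite badd_comm. apply badd_opp. Qed.

Lemma opp_opp x : bopp (bopp x) = x.
Proof. symmetry. apply opp_unique. apply opp_l. Qed.

Lemma opp_add u v : bopp (badd u v) = badd (bopp u) (bopp v).
Proof.
  symmetry. apply opp_unique.
  rewrite (badd_comm X (bopp u) (bopp v)).
  rewrite badd_assoc. rewrite <- (badd_assoc X u v (bopp v)).
  rewrite badd_opp, badd_zero, badd_opp. reflexivity.
Qed.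

Lemma scal_zero a : bscal X a (bzero X) = bzero X.
Proof.
  assert (H : bscal X a (bzero X) = badd (bscal X a (bzero X)) (bscal X a (bzero X))).
  { rewrite <- bscal_distr_r. rewrite badd_zero. reflexivity. }
  assert (H2 := f_equal (fun z => badd z (bopp (bscal X a (bzero X)))) H).
  simpl in H2. rewrite badd_opp in H2. rewrite <- badd_assoc, badd_opp, badd_zero in H2.
  symmetry; exact H2.
Qed.

Lemma opp_scal a v : bopp (bscal X a v) = bscal X a (bopp v).
Proof.
  symmetry. apply opp_unique. rewrite <- bscal_distr_r, badd_opp. apply scal_zero.
Qed.

Lemma sub_scal a u v : bsub (bscal X a u) (bscal X a v) = bscal X a (bsub u v).
Proof. unfold bsub. rewrite opp_scal, bscal_distr_r. reflexivity. Qed.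

Lemma sub_chain u v w : badd (bsub u v) (bsub v w) = bsub u w.
Proof.
  unfold bsub. rewrite <- badd_assoc. rewrite (badd_assoc X (bopp v) v (bopp w)).
  rewrite opp_l, zero_l. reflexivity.
Qed.

Lemma sub_sub u v w : bsub (bsub u v) (bsub u w) = bsub w v.
Proof.
  unfold bsub. rewrite opp_add, opp_opp.
  rewrite <- badd_assoc. rewrite (badd_comm X (bopp v) (badd (bopp u) w)).
  rewrite <- badd_assoc. rewrite (badd_assoc X u (bopp u) _), badd_opp, zero_l.
  reflexivity.
Qed.
End Alg.

Theorem lemma1 (p : R) (hp : 1 < p) (Y : Banach) (hY : beta_power_type Y p) :
  exists gamma, 0 < gamma /\
    forall f : Kw1 -> Y, lipschitz f -> noncontractive f ->
    forall L, Lip_is f L ->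
    exists i0 : nat,
      bnorm (bsub (f Kr) (f (Kt i0))) <= 2 * (L - gamma / Rpower L (p - 1)).
Proof.
  destruct hY as [c [hc hbeta]].
  assert (h2p : 0 < Rpower 2 p) by (unfold Rpower; apply exp_pos).
  set (K := c * Rpower 2 p).
  assert (hK : 0 < K) by (unfold K; nra).
  exists (K / 2). split; [lra|].
  intros f _ hnc L [hub _].
  assert (bound : forall u v, u <> v -> 0 < rho u v ->
            bnorm (bsub (f u) (f v)) <= L * rho u v).
  { intros u v huv hr. assert (H := hub _ (ex_intro _ u (ex_intro _ v (conj huv eq_refl)))).
    simpl in H. apply (Rmult_le_compat_r (rho u v)) in H; [|lra].
    replace (bnorm (bsub (f u) (f v)) / rho u v * rho u v) with (bnorm (bsub (f u) (f v))) in H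
      by (field; lra). exact H. }
  assert (hL1 : 1 <= L).
  { assert (H1 := hnc Kb Kr). simpl in H1.
    assert (H2 := bound Kb Kr ltac:(discriminate) ltac:(simpl; lra)). simpl in H2. lra. }
  assert (hL : 0 < L) by lra.
  set (a := / L).
  assert (ha : 0 < a) by (unfold a; apply Rinv_0_lt_compat; lra).
  set (x := bscal Y a (bsub (f Kr) (f Kb))).
  set (y := fun n => bscal Y a (bsub (f Kb) (f (Kt n)))).
  assert (hx : bnorm x <= 1).
  { unfold x. rewrite bnorm_scal, Rabs_right by lra.
    assert (H2 := bound Kr Kb ltac:(discriminate) ltac:(simpl; lra)). simpl in H2.
    unfold a. apply (Rmult_le_reg_l L); [lra|]. rewrite <- Rmult_assoc, Rinv_r by lra. lra. }
  assert (hy : forall n, bnorm (y n) <= 1).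
  { intro n. unfold y. rewrite bnorm_scal, Rabs_right by lra.
    assert (H2 := bound Kb (Kt n) ltac:(discriminate) ltac:(simpl; lra)). simpl in H2.
    unfold a. apply (Rmult_le_reg_l L); [lra|]. rewrite <- Rmult_assoc, Rinv_r by lra. lra. }
  assert (hsep : sep_ge y (2 / L)).
  { intros m n hmn. unfold y. rewrite sub_scal, sub_sub, bnorm_scal, Rabs_right by lra.
    assert (H := hnc (Kt n) (Kt m)). simpl in H.
    destruct (Nat.eqb n m) eqn:E; [apply Nat.eqb_eq in E; lia|].
    unfold Rdiv. rewrite (Rmult_comm 2). apply Rmult_le_compat_l; lra. }
  assert (ht : 0 < 2 / L <= 2).
  { split. apply Rdiv_lt_0_compat; lra.
    apply (Rmult_le_reg_l L); [lra|]. field_simplify; lra. }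
  set (P := Rpower L p).
  assert (hP : 0 < P) by (unfold P, Rpower; apply exp_pos).
  assert (e1 : Rpower (2 / L) p = Rpower 2 p / P).
  { unfold P, Rpower, Rdiv. rewrite ln_mult, ln_Rinv by (try apply Rinv_0_lt_compat; lra).
    rewrite Rmult_plus_distr_l, exp_plus.
    replace (p * - ln L) with (- (p * ln L)) by ring. rewrite exp_Ropp. reflexivity. }
  assert (e2 : Rpower L (p - 1) = P / L).
  { unfold P. unfold Rminus. rewrite Rpower_plus, Rpower_Ropp, Rpower_1 by lra. reflexivity. }
  destruct (hbeta _ ht x y hx hy hsep (K / (2 * P))) as [n hn].
  { apply Rdiv_lt_0_compat; lra. }
  exists n. rewrite e2. simpl in hn. rewrite e1 in hn.
  unfold x, y in hn. rewrite <- bscal_distr_r, sub_chain, bnorm_scal, Rabs_right in hn by lra.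
  set (D := bnorm (bsub (f Kr) (f (Kt n)))) in *.
  set (Q := K / P).
  assert (E1 : c * (Rpower 2 p / P) = Q) by (unfold Q, K; field; lra).
  assert (E2 : K / (2 * P) = Q / 2) by (unfold Q; field; lra).
  assert (E3 : K / 2 / (P / L) = L * Q / 2) by (unfold Q; field; lra).
  rewrite E1, E2 in hn. rewrite E3.
  assert (E4 : D = 2 * L * (a * D / 2)) by (unfold a; field; lra).
  rewrite E4. nra.
Qed.
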